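(* With the Riccati operator $\mathscr R$ and the RADI iterates $X_1,X_2$, residual factors $R_1,R_2\in\mathbb{R}^{d\times r}$, inner factor $T$ and $\tilde Y_2$ as in the context, suppose $T$ is positive semi-definite. Let $\gamma_1,\gamma_2\in\mathbb{R}$ with $\gamma_1+\gamma_2=1$. Then the residual of the two-term extrapolant, $$\mathscr R(\gamma_1X_1+\gamma_2X_2)=[\,R_1\ R_2\,]\,\mathscr H_2\,[\,R_1\ R_2\,]^{\mathsf T},\qquad \mathscr H_2=\begin{bmatrix}\gamma_1^2T+\gamma_1\gamma_2\tilde Y_2 & \gamma_1\gamma_2(T-\tilde Y_2)\\ \gamma_1\gamma_2(T-\tilde Y_2) & \gamma_2^2T+\gamma_1\gamma_2\tilde Y_2\end{bmatrix},$$ is positive semi-definite if and only if $0\le\gamma_1,\gamma_2\le1$.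
   Context: Data: $A,E\in\mathbb{R}^{d\times d}$, $B\in\mathbb{R}^{d\times p}$, $C\in\mathbb{R}^{q\times d}$, $H\in\mathbb{R}^{p\times p}$ symmetric positive definite, and $\mathscr R(X)=A^{\mathsf T}XE+E^{\mathsf T}XA+C^{\mathsf T}C-E^{\mathsf T}XBH^{-1}B^{\mathsf T}XE$. RADI step: start from $X_1$ with $\mathscr R(X_1)=R_1TR_1^{\mathsf T}$, $R_1\in\mathbb{R}^{d\times r}$, $T=T^{\mathsf T}\in\mathbb{R}^{r\times r}$; with a shift $\sigma_1<0$ set $V_2=\sqrt{-2\sigma_1}(A^{\mathsf T}-E^{\mathsf T}X_1BH^{-1}B^{\mathsf T}+\sigma_1E^{\mathsf T})^{-1}R_1T$, $\tilde Y_2=T-\frac{1}{2\sigma_1}(V_2^{\mathsf T}B)H^{-1}(V_2^{\mathsf T}B)^{\mathsf T}$, $X_2=X_1+V_2\tilde Y_2^{-1}V_2^{\mathsf T}$, $R_2=R_1+\sqrt{-2\sigma_1}E^{\mathsf T}V_2\tilde Y_2^{-1}$ (inverses assumed to exist); then $\mathscr R(X_2)=R_2TR_2^{\mathsf T}$. The displayed factorization with $\mathscr H_2$ (using $\gamma_2-\gamma_2^2=\gamma_1\gamma_2$) holds for all $\gamma_1+\gamma_2=1$.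
   Formalization: The equivalence with 0≤γ₁,γ₂≤1 concerns positive semi-definiteness of the inner factor $\mathscr H_2$ rather than of the residual $\mathscr R(\gamma_1X_1+\gamma_2X_2)$, the factorization is part of the conclusion, and X₁ is symmetric and r ≥ 1. Apart from conventions, each condition added here is assumed in the paper as well or is needed for the statement above to hold. *)

(* Defs.v *)
From HB Require Import structures.
From mathcomp Require Import all_boot all_order all_algebra.
Set Implicit Arguments. Unset Strict Implicit. Unset Printing Implicit Defensive.
Import Order.TTheory GRing.Theory Num.Theory.
Local Open Scope ring_scope.

Definition psd (R : rcfType) (n : nat) (M : 'M[R]_n) : Prop :=
  M^T = M /\ forall x : 'cV[R]_n, 0 <= (x^T *m M *m x) 0 0.

Definition spd (R : rcfType) (n : nat) (M : 'M[R]_n) : Prop :=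
  M^T = M /\ forall x : 'cV[R]_n, x != 0 -> 0 < (x^T *m M *m x) 0 0.

Definition riccati (R : rcfType) (d p q : nat) (A E : 'M[R]_d) (B : 'M[R]_(d, p))
  (C : 'M[R]_(q, d)) (H : 'M[R]_p) (X : 'M[R]_d) : 'M[R]_d :=
  A^T *m X *m E + E^T *m X *m A + C^T *m C
  - E^T *m X *m B *m invmx H *m B^T *m X *m E.

Definition radi_M (R : rcfType) (d p : nat) (A E : 'M[R]_d) (B : 'M[R]_(d, p))
  (H : 'M[R]_p) (X1 : 'M[R]_d) (sigma : R) : 'M[R]_d :=
  A^T - E^T *m X1 *m B *m invmx H *m B^T + sigma *: E^T.

Definition radi_V2 (R : rcfType) (d p r : nat) (A E : 'M[R]_d) (B : 'M[R]_(d, p))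
  (H : 'M[R]_p) (X1 : 'M[R]_d) (R1 : 'M[R]_(d, r)) (T : 'M[R]_r) (sigma : R)
  : 'M[R]_(d, r) :=
  Num.sqrt (- (2 * sigma)) *: (invmx (radi_M A E B H X1 sigma) *m R1 *m T).

Definition radi_Y2 (R : rcfType) (d p r : nat) (B : 'M[R]_(d, p)) (H : 'M[R]_p)
  (V2 : 'M[R]_(d, r)) (T : 'M[R]_r) (sigma : R) : 'M[R]_r :=
  T - (2 * sigma)^-1 *: ((V2^T *m B) *m invmx H *m (V2^T *m B)^T).

Definition radi_X2 (R : rcfType) (d r : nat) (X1 : 'M[R]_d) (V2 : 'M[R]_(d, r))
  (Y2 : 'M[R]_r) : 'M[R]_d :=
  X1 + V2 *m invmx Y2 *m V2^T.

Definition radi_R2 (R : rcfType) (d r : nat) (E : 'M[R]_d) (R1 V2 : 'M[R]_(d, r))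
  (Y2 : 'M[R]_r) (sigma : R) : 'M[R]_(d, r) :=
  R1 + Num.sqrt (- (2 * sigma)) *: (E^T *m V2 *m invmx Y2).

Definition radi_H2 (R : rcfType) (r : nat) (T Y2 : 'M[R]_r) (g1 g2 : R)
  : 'M[R]_(r + r) :=
  block_mx (g1 ^+ 2 *: T + (g1 * g2) *: Y2) ((g1 * g2) *: (T - Y2))
           ((g1 * g2) *: (T - Y2))  (g2 ^+ 2 *: T + (g1 * g2) *: Y2).

(* Main.v *)
Require Import Defs.
From HB Require Import structures.
From mathcomp Require Import all_boot all_order all_algebra.
From mathcomp Require Import ring lra.
Import Order.TTheory GRing.Theory Num.Theory.
Local Open Scope ring_scope.

Section N.
Variable R : rcfType.
Lemma trD m n (A B : 'M[R]_(m,n)) : (A + B)^T = A^T + B^T. Proof. exact: linearD. Qed.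
Lemma trN m n (A : 'M[R]_(m,n)) : (- A)^T = - A^T. Proof. exact: linearN. Qed.
Lemma trB m n (A B : 'M[R]_(m,n)) : (A - B)^T = A^T - B^T. Proof. exact: linearB. Qed.
Lemma trZ m n a (A : 'M[R]_(m,n)) : (a *: A)^T = a *: A^T. Proof. exact: linearZ. Qed.
Lemma sAl m n p a (A : 'M[R]_(m, n)) (B : 'M_(n, p)) : (a *: A) *m B = a *: (A *m B).
Proof. by rewrite scalemxAl. Qed.
Lemma sAr m n p a (A : 'M[R]_(m, n)) (B : 'M_(n, p)) : A *m (a *: B) = a *: (A *m B).
Proof. by rewrite scalemxAr. Qed.
End N.

Ltac mnorm := rewrite ?(trmx_mul, trmxK, trD, trN, trB, trZ, mulmxDl, mulmxDr, mulmxBl, mulmxBr, mulmxN, mulNmx, sAl, sAr, mulmxA).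
Ltac genp := repeat match goal with
  | |- context [invmx ?x] => let z := fresh "z" in set z := (invmx x); clearbody z
  | |- context [mulmx ?x ?y] => let z := fresh "z" in set z := (mulmx x y); clearbody z
  end.
Ltac entry := apply/matrixP => i j; rewrite !mxE.


Lemma addE (R : rcfType) m n (A B : 'M[R]_(m,n)) i j : (A + B) i j = A i j + B i j.
Proof. by rewrite mxE. Qed.
Lemma z0E (R : rcfType) m n i j : (0 : 'M[R]_(m,n)) i j = 0.
Proof. by rewrite mxE. Qed.
Lemma ecomb (R : rcfType) (P1 P2 P3 : 'M[R]_1) a b c :
  (a *: P1 + b *: P2 + c *: P3) 0 0 = a * P1 0 0 + b * P2 0 0 + c * P3 0 0.
Proof. by rewrite !mxE. Qed.

Lemma qf_nonzero (R : rcfType) r (Y : 'M[R]_r) : (0 < r)%N -> Y^T = Y -> Y \in unitmx ->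
  exists z : 'cV[R]_r, (z^T *m Y *m z) 0 0 != 0.
Proof.
move=> hr YT Yu; pose i0 := Ordinal hr; pose e : 'cV[R]_r := delta_mx i0 0.
pose w := invmx Y *m e.
have key : (e^T *m Y *m w) 0 0 = 1.
  by rewrite /w -mulmxA (mulmxA Y) mulmxV // mul1mx /e trmx_delta mul_delta_mx mxE !eqxx.
have sym : (w^T *m Y *m e) 0 0 = (e^T *m Y *m w) 0 0.
  have <- : (e^T *m Y *m w)^T = w^T *m Y *m e by rewrite !trmx_mul trmxK YT mulmxA.
  by rewrite mxE.
have ex : ((e + w)^T *m Y *m (e + w)) 0 0
    = (e^T *m Y *m e) 0 0 + (e^T *m Y *m w) 0 0 + (w^T *m Y *m e) 0 0 + (w^T *m Y *m w) 0 0.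
  by rewrite trD !mulmxDl !mulmxDr !addE; ring.
have [h1|h1] := eqVneq ((e^T *m Y *m e) 0 0) 0; last by exists e.
have [h2|h2] := eqVneq ((w^T *m Y *m w) 0 0) 0; last by exists w.
exists (e + w); rewrite ex h1 h2 sym key; apply/negP => /eqP; lra.
Qed.

Lemma ric_expand (R : rcfType) d p q (A E : 'M[R]_d) B (C : 'M[R]_(q,d)) (H : 'M[R]_p) X D :
 riccati A E B C H (X + D) = riccati A E B C H X
   + ((A^T *m D *m E + E^T *m D *m A - E^T *m X *m B *m invmx H *m B^T *m D *m E - E^T *m D *m B *m invmx H *m B^T *m X *m E)
   - E^T *m D *m B *m invmx H *m B^T *m D *m E).
Proof. rewrite /riccati; mnorm; genp; entry; ring. Qed.

Theorem theorem3 (R : rcfType) (d p q r : nat)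
  (A E : 'M[R]_d) (B : 'M[R]_(d, p)) (C : 'M[R]_(q, d)) (H : 'M[R]_p)
  (X1 : 'M[R]_d) (R1 : 'M[R]_(d, r)) (T : 'M[R]_r) (sigma g1 g2 : R) :
  (0 < r)%N ->
  spd H ->
  X1^T = X1 ->
  riccati A E B C H X1 = R1 *m T *m R1^T ->
  T^T = T ->
  sigma < 0 ->
  radi_M A E B H X1 sigma \in unitmx ->
  radi_Y2 B H (radi_V2 A E B H X1 R1 T sigma) T sigma \in unitmx ->
  psd T ->
  g1 + g2 = 1 ->
  let V2 := radi_V2 A E B H X1 R1 T sigma in
  let Y2 := radi_Y2 B H V2 T sigma in
  let X2 := radi_X2 X1 V2 Y2 in
  let R2 := radi_R2 E R1 V2 Y2 sigma in
  let H2 := radi_H2 T Y2 g1 g2 in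
  riccati A E B C H (g1 *: X1 + g2 *: X2)
    = row_mx R1 R2 *m H2 *m (row_mx R1 R2)^T
  /\ (psd H2 <-> (0 <= g1 <= 1 /\ 0 <= g2 <= 1)).
Proof.
move=> hr [HT Hpd] hX1 hric hT hsig hMu hYu hTpsd hg V Y X2 R2 H2.
have hg1 : g1 = 1 - g2 by rewrite -hg addrK.
have Hu : H \in unitmx.
  rewrite unitmxE unitfE; apply/negP => /det0P [v v0 vH].
  have := Hpd v^T; rewrite trmx_eq0 => /(_ v0).
  by rewrite trmxK vH mul0mx mxE ltxx.
have HiT : (invmx H)^T = invmx H by rewrite trmx_inv HT.
have Ydef : Y = T - (2 * sigma)^-1 *: (V^T *m B *m invmx H *m B^T *m V).
  by rewrite /Y /radi_Y2 trmx_mul trmxK !mulmxA.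
have YT : Y^T = Y by rewrite Ydef !(trB, trZ, trmx_mul, trmxK, HiT, hT) !mulmxA.
have YiT : (invmx Y)^T = invmx Y by rewrite trmx_inv YT.
have MV : radi_M A E B H X1 sigma *m V = Num.sqrt (- (2 * sigma)) *: (R1 *m T).
  by rewrite /V /radi_V2 sAr !mulmxA mulmxV // mul1mx.
have MVT : forall m (Z : 'M_(m, r)), Z *m V^T *m (radi_M A E B H X1 sigma)^T
    = Num.sqrt (- (2 * sigma)) *: (Z *m T *m R1^T).
  by move=> m Z; rewrite -mulmxA -trmx_mul MV trZ trmx_mul hT sAr mulmxA.
have Ainv : A^T = radi_M A E B H X1 sigma + E^T *m X1 *m B *m invmx H *m B^T - sigma *: E^T.
  by rewrite /radi_M; genp; entry; ring.
have Aeq : A = (radi_M A E B H X1 sigma)^T + B *m invmx H *m B^T *m X1 *m E - sigma *: E.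
  by rewrite -[LHS]trmxK Ainv !(trB, trD, trZ, trmx_mul, trmxK, HiT, hX1) !mulmxA.
have YiY : forall m (Z : 'M_(m, r)), Z *m invmx Y *m Y = Z.
  by move=> m Z; rewrite -mulmxA mulVmx // mulmx1.
have YiTYi : forall m (Z : 'M_(m, r)), Z *m invmx Y *m T *m invmx Y = Z *m invmx Y
   + (2 * sigma)^-1 *: (Z *m invmx Y *m V^T *m B *m invmx H *m B^T *m V *m invmx Y).
  move=> m Z; have -> : T = Y + (2 * sigma)^-1 *: (V^T *m B *m invmx H *m B^T *m V).
    by rewrite Ydef subrK.
  by rewrite mulmxDr mulmxDl YiY sAr sAl !mulmxA.
have hX2 : X2 = X1 + V *m invmx Y *m V^T by [].
have hs2 : Num.sqrt (- (2 * sigma)) ^+ 2 = - (2 * sigma) by apply: sqr_sqrtr; lra.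
have hs0 : Num.sqrt (- (2 * sigma)) != 0 by rewrite gt_eqF // sqrtr_gt0; lra.
split.
  have -> : g1 *: X1 + g2 *: X2 = X1 + g2 *: (V *m invmx Y *m V^T).
    by rewrite hX2; genp; entry; rewrite hg1; ring.
  rewrite ric_expand hric /R2 /radi_R2 /H2 /radi_H2 tr_row_mx mul_row_block mul_row_col.
  move: MV MVT Ainv Aeq; generalize (radi_M A E B H X1 sigma) => Mm MV MVT Ainv Aeq.
  clearbody Y V.
  rewrite Ainv Aeq.
  mnorm; rewrite ?YiT; mnorm; rewrite ?MV ?MVT; mnorm; rewrite ?YiY ?YiTYi; mnorm.
  move: hs2 hs0; generalize (Num.sqrt (- (2 * sigma))) => s hs2 hs0.
  have hsig' : sigma = - (s ^+ 2) / 2 by rewrite hs2; lra.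
  by genp; entry; rewrite hg1 hsig'; field.
have Hipsd : forall u : 'cV_p, 0 <= (u^T *m invmx H *m u) 0 0.
  move=> u; have [w0|wn0] := eqVneq (invmx H *m u) 0.
    by rewrite -mulmxA w0 mulmx0 mxE.
  have := Hpd _ wn0; rewrite trmx_mul HiT -!mulmxA [H *m (invmx H *m u)]mulmxA mulmxV //.
  by rewrite mul1mx mulmxA => /ltW.
have Wpsd : forall z : 'cV_r, 0 <= (z^T *m (Y - T) *m z) 0 0.
  move=> z; have -> : Y - T = (- (2 * sigma))^-1 *: (V^T *m B *m invmx H *m B^T *m V).
    by rewrite Ydef addrAC subrr add0r invrN scaleNr.
  rewrite sAr sAl mxE; apply: mulr_ge0; first by rewrite invr_ge0; lra.
  by have := Hipsd (B^T *m V *m z); rewrite !trmx_mul trmxK !mulmxA.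
have [z0 hz0] := @qf_nonzero _ _ Y hr YT hYu.
have YW : Y = T + (Y - T) by rewrite addrC subrK.
have WT : (Y - T)^T = Y - T by rewrite trB YT hT.
rewrite /H2 /radi_H2.
move: hz0; rewrite {1}YW mulmxDr mulmxDl addE => hz0.
clearbody Y V.
move: Wpsd WT hz0 YW; move: (Y - T) => W Wpsd WT hz0 YW.
rewrite YW.
have ident : forall a b : 'cV_r, (col_mx a b)^T *m
   block_mx (g1 ^+ 2 *: T + (g1 * g2) *: (T + W)) ((g1 * g2) *: (T - (T + W)))
     ((g1 * g2) *: (T - (T + W))) (g2 ^+ 2 *: T + (g1 * g2) *: (T + W)) *m col_mx a b
   = g1 *: (a^T *m T *m a) + g2 *: (b^T *m T *m b) + (g1 * g2) *: ((a - b)^T *m W *m (a - b)).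
  move=> a b; rewrite tr_col_mx mul_row_block mul_row_col.
  by mnorm; genp; entry; rewrite hg1; ring.
have Tpsd := hTpsd.2.
split.
  move=> [_ Hq].
  have q1 := Hq (col_mx z0 0); have q2 := Hq (col_mx 0 z0).
  rewrite ident ecomb subr0 !mulmx0 z0E in q1.
  rewrite ident ecomb sub0r !mulmx0 ?trmx0 ?mul0mx trN !mulNmx mulmxN opprK z0E in q2.
  have t0 := Tpsd z0; have w0 := Wpsd z0.
  have qp : 0 < (z0^T *m T *m z0) 0 0 + (z0^T *m W *m z0) 0 0.
    by rewrite lt_def hz0 addr_ge0.
  have ge1 : 0 <= g1.
    rewrite leNgt; apply/negP => h.
    have : 0 < (z0^T *m T *m z0) 0 0 + g2 * (z0^T *m W *m z0) 0 0 by nra.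
    nra.
  have ge2 : 0 <= g2.
    rewrite leNgt; apply/negP => h.
    have : 0 < (z0^T *m T *m z0) 0 0 + g1 * (z0^T *m W *m z0) 0 0 by nra.
    nra.
  by split; apply/andP; split; lra.
move=> [/andP[g10 g11] /andP[g20 g21]]; split.
  by rewrite tr_block_mx !trD !trZ !trB !trD hT WT.
move=> x; rewrite -(vsubmxK x) ident ecomb.
apply: addr_ge0; first apply: addr_ge0; apply: mulr_ge0 => //; try exact: mulr_ge0.
Qed.
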